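(* Let $\Omega\subset\mathbb{R}^n$ be a bounded open convex set with smooth boundary, let $\Lambda>0$, and let $u$ be a nonconstant continuous viscosity solution of $(N_\Lambda)$. Let $\Omega_1\subset\Omega$ be an open connected set and $m>0$ a constant such that $u\ge m$ on $\overline{\Omega_1}$. Then $u>m$ in $\Omega_1$.
   Context: $\nu$ denotes the outer unit normal to $\partial\Omega$, and $\Delta_\infty u=\sum_{i,j=1}^n u_{x_i}u_{x_ix_j}u_{x_j}$. For $\Lambda\ge 0$, problem $(N_\Lambda)$ is $$\min\{|\nabla u|-\Lambda|u|,-\Delta_\infty u\}=0 \text{ in }\{u>0\}\cap\Omega,\quad \max\{\Lambda|u|-|\nabla u|,-\Delta_\infty u\}=0 \text{ in }\{u<0\}\cap\Omega,\quad -\Delta_\infty u=0 \text{ in }\{u=0\}\cap\Omega,\quad \tfrac{\partial u}{\partial\nu}=0 \text{ on }\partial\Omega,$$ understood in the viscosity sense as follows. For $s\in\mathbb{R}$, $\xi\in\mathbb{R}^n$, $X$ a symmetric $n\times n$ matrix, let $F(s,\xi,X)=\min\{|\xi|-\Lambda|s|,-\langle X\xi,\xi\rangle\}$, $G(s,\xi,X)=\max\{\Lambda|s|-|\xi|,-\langle X\xi,\xi\rangle\}$, $H(X)=-\langle X\xi,\xi\rangle$ (evaluated at the same $\xi$). For a function $u$ and point $x_0$, let $E$ denote $F$ if $u(x_0)>0$, $G$ if $u(x_0)<0$, $H$ if $u(x_0)=0$. An upper semicontinuous $u$ on $\overline\Omega$ is a viscosity subsolution if: for every $x_0\in\Omega$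 and $\phi\in C^2(\Omega)$ with $\phi(x_0)=u(x_0)$ and $u(x)<\phi(x)$ for $x\neq x_0$, one has $E(\phi(x_0),\nabla\phi(x_0),\nabla^2\phi(x_0))\le 0$; and for every $x_0\in\partial\Omega$ and $\phi\in C^2(\overline\Omega)$ with the same touching property, $\min\{E(\phi(x_0),\nabla\phi(x_0),\nabla^2\phi(x_0)),\frac{\partial\phi}{\partial\nu}(x_0)\}\le 0$. A lower semicontinuous $u$ is a viscosity supersolution if the same holds with $u(x)>\phi(x)$ for $x\ne x_0$, with ''$E\le 0$'' replaced by ''$E\ge 0$'' at interior points and with $\max\{E(\phi(x_0),\nabla\phi(x_0),\nabla^2\phi(x_0)),\frac{\partial\phi}{\partial\nu}(x_0)\}\ge 0$ at boundary points. A continuous $u$ is a viscosity solution if it is both a sub- and a supersolution. *)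

(* Defs.v *)
From mathcomp Require Import all_boot.
From Stdlib Require Import Reals.
Open Scope R_scope.

Definition pt (n : nat) := 'I_n -> R.

Definition vadd {n} (x y : pt n) : pt n := fun i => x i + y i.
Definition vsub {n} (x y : pt n) : pt n := fun i => x i - y i.
Definition vscale {n} (t : R) (x : pt n) : pt n := fun i => t * x i.
Definition ebasis {n} (i : 'I_n) : pt n := fun j => if i == j then 1 else 0.
Definition dot {n} (x y : pt n) : R := \big[Rplus/0]_(i < n) (x i * y i).
Definition vnorm {n} (x : pt n) : R := sqrt (dot x x).
Definition dist {n} (x y : pt n) : R := vnorm (vsub x y).

Definition quad {n} (X : 'I_n -> 'I_n -> R) (xi : pt n) : R :=
  \big[Rplus/0]_(i < n) \big[Rplus/0]_(j < n) (X i j * xi i * xi j).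

Definition is_open_n {n} (U : pt n -> Prop) : Prop :=
  forall x, U x -> exists r, 0 < r /\ forall y, dist y x < r -> U y.
Definition closure_n {n} (U : pt n -> Prop) (x : pt n) : Prop :=
  forall eps, 0 < eps -> exists y, U y /\ dist y x < eps.
Definition boundary_n {n} (U : pt n -> Prop) (x : pt n) : Prop :=
  closure_n U x /\ ~ U x.
Definition bounded_n {n} (U : pt n -> Prop) : Prop :=
  exists M, forall x, U x -> vnorm x <= M.
Definition convex_n {n} (U : pt n -> Prop) : Prop :=
  forall x y t, U x -> U y -> 0 <= t <= 1 ->
    U (vadd (vscale (1 - t) x) (vscale t y)).
Definition connected_n {n} (U : pt n -> Prop) : Prop :=
  forall A B : pt n -> Prop, is_open_n A -> is_open_n B ->
    (forall x, U x -> A x \/ B x) ->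
    (forall x, ~ (U x /\ A x /\ B x)) ->
    (forall x, U x -> A x) \/ (forall x, U x -> B x).

Definition cont_at {n} (f : pt n -> R) (x : pt n) : Prop :=
  forall eps, 0 < eps -> exists d, 0 < d /\
    forall y, dist y x < d -> Rabs (f y - f x) < eps.
Definition cont_on_rel {n} (S : pt n -> Prop) (f : pt n -> R) : Prop :=
  forall x, S x -> forall eps, 0 < eps -> exists d, 0 < d /\
    forall y, S y -> dist y x < d -> Rabs (f y - f x) < eps.

Definition has_partial {n} (f : pt n -> R) (i : 'I_n) (x : pt n) (l : R) : Prop :=
  derivable_pt_lim (fun t => f (vadd x (vscale t (ebasis i)))) 0 l.

Definition C2_on {n} (U : pt n -> Prop) (f : pt n -> R)
    (Df : pt n -> pt n) (D2f : pt n -> 'I_n -> 'I_n -> R) : Prop :=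
  (forall x, U x -> forall i, has_partial f i x (Df x i)) /\
  (forall x, U x -> forall i j, has_partial (fun y => Df y i) j x (D2f x i j)) /\
  (forall x, U x -> cont_at f x) /\
  (forall x, U x -> forall i, cont_at (fun y => Df y i) x) /\
  (forall x, U x -> forall i j, cont_at (fun y => D2f y i j) x).

Fixpoint Ck {n} (k : nat) (f : pt n -> R) : Prop :=
  match k with
  | O => forall x, cont_at f x
  | S k' => (forall x, cont_at f x) /\
      forall i : 'I_n, exists g : pt n -> R,
        (forall x, has_partial f i x (g x)) /\ Ck k' g
  end.
Definition smooth {n} (f : pt n -> R) : Prop := forall k, Ck k f.

(* Omega has smooth boundary_n, described by a global smooth defining function
   rho with Omega = {rho < 0} and nonvanishing gradient Drho on the boundary_n *)
Definition defining_function {n} (Omega : pt n -> Prop)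
    (rho : pt n -> R) (Drho : pt n -> pt n) : Prop :=
  smooth rho /\
  (forall x i, has_partial rho i x (Drho x i)) /\
  (forall x, Omega x <-> rho x < 0) /\
  (forall x, boundary_n Omega x -> vnorm (Drho x) <> 0).

Definition outer_normal {n} (Drho : pt n -> pt n) (x : pt n) : pt n :=
  vscale (/ vnorm (Drho x)) (Drho x).

Definition Fop {n} (Lam s : R) (xi : pt n) X : R :=
  Rmin (vnorm xi - Lam * Rabs s) (- quad X xi).
Definition Gop {n} (Lam s : R) (xi : pt n) X : R :=
  Rmax (Lam * Rabs s - vnorm xi) (- quad X xi).
Definition Hop {n} (xi : pt n) X : R := - quad X xi.

Definition Eop {n} (Lam ux0 s : R) (xi : pt n) X : R :=
  match Rlt_dec 0 ux0 with
  | left _ => Fop Lam s xi X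
  | right _ => match Rlt_dec ux0 0 with
               | left _ => Gop Lam s xi X
               | right _ => Hop xi X
               end
  end.

Definition viscosity_solution {n} (Omega : pt n -> Prop) (nu : pt n -> pt n)
    (Lam : R) (u : pt n -> R) : Prop :=
  cont_on_rel (closure_n Omega) u /\
  (forall x0 phi Dphi D2phi, Omega x0 -> C2_on Omega phi Dphi D2phi ->
     phi x0 = u x0 -> (forall x, Omega x -> x <> x0 -> u x < phi x) ->
     Eop Lam (u x0) (phi x0) (Dphi x0) (D2phi x0) <= 0) /\
  (forall x0 U phi Dphi D2phi, boundary_n Omega x0 -> is_open_n U ->
     (forall x, closure_n Omega x -> U x) -> C2_on U phi Dphi D2phi ->
     phi x0 = u x0 -> (forall x, closure_n Omega x -> x <> x0 -> u x < phi x) ->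
     Rmin (Eop Lam (u x0) (phi x0) (Dphi x0) (D2phi x0))
          (dot (Dphi x0) (nu x0)) <= 0) /\
  (forall x0 phi Dphi D2phi, Omega x0 -> C2_on Omega phi Dphi D2phi ->
     phi x0 = u x0 -> (forall x, Omega x -> x <> x0 -> u x > phi x) ->
     Eop Lam (u x0) (phi x0) (Dphi x0) (D2phi x0) >= 0) /\
  (forall x0 U phi Dphi D2phi, boundary_n Omega x0 -> is_open_n U ->
     (forall x, closure_n Omega x -> U x) -> C2_on U phi Dphi D2phi ->
     phi x0 = u x0 -> (forall x, closure_n Omega x -> x <> x0 -> u x > phi x) ->
     Rmax (Eop Lam (u x0) (phi x0) (Dphi x0) (D2phi x0))
          (dot (Dphi x0) (nu x0)) >= 0).

(* Main.v *)
From HB Require Import structures.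
Require Import Defs.
From mathcomp Require Import all_boot zify.
From Stdlib Require Import Reals Lra Classical ClassicalEpsilon FunctionalExtensionality.
From Coquelicot Require Coquelicot.
Open Scope R_scope.

Module Der.
Import Coquelicot.Coquelicot.
Lemma d1 c K q a : derivable_pt_lim (fun t => c - K * (q + (2*t*a + t*t))) 0 (-(2*K)*a).
Proof. apply is_derive_Reals. auto_derive. auto. ring. Qed.
Lemma d2 c K a : derivable_pt_lim (fun t => c * (a + t * K)) 0 (c*K).
Proof. apply is_derive_Reals. auto_derive. auto. ring. Qed.
End Der.

HB.instance Definition _ := Monoid.isComLaw.Build R 0 Rplus (fun a b c => esym (Rplus_assoc a b c)) Rplus_comm Rplus_0_l.

Lemma sum_le n (F G : 'I_n -> R) : (forall i, F i <= G i) ->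
  \big[Rplus/0]_(i < n) F i <= \big[Rplus/0]_(i < n) G i.
Proof. move=> H; apply: (big_ind2 (fun a b => a <= b)) => //; [lra | move=> *; lra]. Qed.

Lemma sum_ge0 n (F : 'I_n -> R) : (forall i, 0 <= F i) -> 0 <= \big[Rplus/0]_(i < n) F i.
Proof. move=> H; apply: (big_ind (fun a => 0 <= a)) => //; [lra | move=> *; lra]. Qed.

Lemma sum_abs n (F G : 'I_n -> R) : (forall i, Rabs (F i) <= G i) ->
  Rabs (\big[Rplus/0]_(i < n) F i) <= \big[Rplus/0]_(i < n) G i.
Proof.
move=> H; apply: (big_ind2 (fun a b => Rabs a <= b)) => //.
  rewrite Rabs_R0; lra.
move=> a b c d h1 h2; have := Rabs_triang a c; lra.
Qed.

Lemma sum_const n c : \big[Rplus/0]_(i < n) c = INR n * c.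
Proof.
elim: n => [|n IH]; first by rewrite big_ord0 /=; lra.
rewrite big_ord_recr IH S_INR /=; lra.
Qed.

Lemma dot_ge0 n (w : pt n) : 0 <= dot w w.
Proof. apply: sum_ge0 => i; apply: Rle_0_sqr. Qed.

Lemma coord_le_dot n (w : pt n) i : w i * w i <= dot w w.
Proof.
rewrite /dot (bigD1 i) //=.
set S := bigop.body _ _ _.
have : 0 <= S.
  apply: (big_ind (fun a => 0 <= a)) => //; [lra | move=> *; lra | move=> *; apply Rle_0_sqr].
lra.
Qed.

Lemma coord_le_norm n (w : pt n) i : Rabs (w i) <= vnorm w.
Proof.
rewrite /vnorm -sqrt_Rsqr_abs; apply: sqrt_le_1_alt.
rewrite /Rsqr; exact: coord_le_dot.
Qed.

Lemma vnorm0 n (w : pt n) : (forall i, w i = 0) -> vnorm w = 0.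
Proof.
move=> H; rewrite /vnorm /dot big1 ?sqrt_0 // => i _; rewrite H; lra.
Qed.

Lemma dist_refl n (x : pt n) : Defs.dist x x = 0.
Proof. apply: vnorm0 => i; rewrite /vsub; lra. Qed.

Lemma in_closure n (U : pt n -> Prop) x : U x -> closure_n U x.
Proof. move=> Ux eps he; exists x; split=> //; rewrite dist_refl; lra. Qed.

Lemma vnorm_sq n (w : pt n) : vnorm w * vnorm w = dot w w.
Proof. rewrite /vnorm sqrt_sqrt //; exact: dot_ge0. Qed.

Lemma dot_basis n (w : pt n) i t :
  dot (vadd w (vscale t (ebasis i))) (vadd w (vscale t (ebasis i)))
  = dot w w + (2 * t * w i + t * t).
Proof.
rewrite /dot (bigD1 i) //= [in RHS](bigD1 i) //=.
rewrite (eq_bigr (fun j => w j * w j)); last first.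
  move=> j /negbTE hj; rewrite /vadd /vscale /ebasis eq_sym hj; lra.
rewrite /vadd /vscale /ebasis eqxx; lra.
Qed.

Lemma abs_between a M : Rabs a <= M -> -M <= a <= M.
Proof. move=> h; have := Rle_abs a; have := Rle_abs (-a); rewrite Rabs_Ropp; lra. Qed.

Lemma incr_ge (phi : nat -> nat) : (forall j, (phi j < phi j.+1)%nat) -> forall j, (j <= phi j)%nat.
Proof. move=> H; elim=> [|j IH] //; have := H j; lia. Qed.

Lemma incr_mono (phi : nat -> nat) : (forall j, (phi j < phi j.+1)%nat) ->
  forall a b, (a <= b)%nat -> (phi a <= phi b)%nat.
Proof.
move=> H a b; elim: b => [|b IH]; first by rewrite leqn0 => /eqP ->.
rewrite leq_eqVlt => /orP [/eqP -> //| hab]; have := IH hab; have := H b; lia.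
Qed.

Lemma cv_sub (u : nat -> R) l phi : (forall j, (phi j < phi j.+1)%nat) ->
  Un_cv u l -> Un_cv (fun j => u (phi j)) l.
Proof.
move=> H cv eps he; have [N HN] := cv eps he; exists N => j hj.
apply: HN; have := incr_ge phi H j; rewrite /ge in hj *; lia.
Qed.

Lemma BW1 (un : nat -> R) M : (forall j, Rabs (un j) <= M) ->
  exists (phi : nat -> nat) l, (forall j, (phi j < phi j.+1)%nat) /\ Un_cv (fun j => un (phi j)) l.
Proof.
move=> hM.
have [l hl] := Bolzano_Weierstrass un (fun c => -M <= c <= M) (compact_P3 (-M) M)
  (fun j => abs_between _ _ (hM j)).
have H : forall k N : nat, exists p, (N <= p)%nat /\ Rabs (un p - l) < / INR k.+1.
  move=> k N.
  have hpos : 0 < / INR k.+1 by apply: Rinv_0_lt_compat; apply: lt_0_INR; lia.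
  have [p [hp1 hp2]] := hl (disc l (mkposreal _ hpos)) N
    (ex_intro _ (mkposreal _ hpos) (fun y h => h)).
  by exists p; split => //; apply/leP.
pose g k N := proj1_sig (constructive_indefinite_description _ (H k N)).
have hg : forall k N, (N <= g k N)%nat /\ Rabs (un (g k N) - l) < / INR k.+1.
  move=> k N; exact: (proj2_sig (constructive_indefinite_description _ (H k N))).
pose phi := fix f (j : nat) : nat := match j with O => g O O | S jj => g j (S (f jj)) end.
exists phi, l; split.
  move=> j /=; by have [h _] := hg j.+1 (phi j).+1.
have hphi : forall j, Rabs (un (phi j) - l) < / INR j.+1.
  by case=> [|j] /=; [have [_ h] := hg O O | have [_ h] := hg j.+1 (phi j).+1].
move=> eps he.
have [N hN] := INR_archimed eps 1 he.
exists N => j hj; rewrite /R_dist.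
apply: Rlt_le_trans (hphi j) _.
have hN0 : (0 < N)%nat.
  case: N hN {hj} => [|N] //=; lra.
have h1 : INR N <= INR j.+1 by apply: le_INR; rewrite /ge in hj; lia.
have h2 : 0 < INR N by apply: lt_0_INR; lia.
have h3 : / INR j.+1 <= / INR N by apply: Rinv_le_contravar.
have h4 : / INR N < eps.
  apply: (Rmult_lt_reg_l (INR N)) => //; rewrite Rinv_r; lra.
lra.
Qed.

Lemma BWn n (x : nat -> pt n) M : (forall j i, Rabs (x j i) <= M) ->
  exists (phi : nat -> nat) (l : pt n), (forall j, (phi j < phi j.+1)%nat) /\
    forall i, Un_cv (fun j => x (phi j) i) (l i).
Proof.
move=> hM.
suff : forall k, exists (phi : nat -> nat) (l : pt n), (forall j, (phi j < phi j.+1)%nat) /\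
    forall i : 'I_n, (i < k)%nat -> Un_cv (fun j => x (phi j) i) (l i).
  move=> /(_ n) [phi [l [h1 h2]]]; exists phi, l; split => // i; exact: h2.
elim=> [|k [phi [l [h1 h2]]]].
  exists (fun j : nat => j), (fun _ => 0); split => // j; lia.
case: (ltnP k n) => hkn; last first.
  exists phi, l; split => // i hi; apply: h2; have := ltn_ord i; lia.
have [psi [l0 [hp1 hp2]]] := BW1 (fun j => x (phi j) (Ordinal hkn)) M (fun j => hM _ _).
exists (fun j => phi (psi j)), (fun i => if (nat_of_ord i == k) then l0 else l i); split.
  move=> j; have := incr_mono phi h1 (psi j).+1 (psi j.+1) (hp1 j); have := h1 (psi j); lia.
move=> i hi; case: eqP => hik.
  have -> : i = Ordinal hkn by apply: val_inj; rewrite /= hik.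
  exact: hp2.
apply: (cv_sub (fun j => x (phi j) i)) => //; apply: h2; lia.
Qed.

Lemma sum_cv0 (I : Type) (r : seq I) (P : pred I) (F : I -> nat -> R) :
  (forall i, Un_cv (F i) 0) -> Un_cv (fun j => \big[Rplus/0]_(i <- r | P i) F i j) 0.
Proof.
move=> H; elim: r => [|a r IH].
  move=> eps he; exists O => j _; rewrite big_nil /R_dist Rminus_0_r Rabs_R0; lra.
have := CV_plus _ _ _ _ (H a) IH; rewrite Rplus_0_r => hc.
case hPa: (P a).
  move=> eps he; have [N hN] := hc eps he; exists N => j hj; rewrite big_cons hPa; exact: hN.
move=> eps he; have [N hN] := IH eps he; exists N => j hj; rewrite big_cons hPa; exact: hN.
Qed.

Lemma lower_bound n (Omega : pt n -> Prop) u : bounded_n Omega ->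
  cont_on_rel (closure_n Omega) u -> exists L, forall x, Omega x -> L <= u x.
Proof.
move=> [M hM] hc; apply: NNPP => hno.
have hx : forall k : nat, exists x, Omega x /\ u x < - INR k.
  move=> k; apply: NNPP => h; apply: hno; exists (- INR k) => x hx.
  apply: Rnot_lt_le => hlt; apply: h; by exists x.
pose xs k := proj1_sig (constructive_indefinite_description _ (hx k)).
have hxs : forall k, Omega (xs k) /\ u (xs k) < - INR k.
  move=> k; exact: (proj2_sig (constructive_indefinite_description _ (hx k))).
have hb : forall j i, Rabs (xs j i) <= M.
  move=> j i; have := coord_le_norm _ (xs j) i; have := hM _ (proj1 (hxs j)); lra.
have [phi [l [h1 h2]]] := BWn n xs M hb.
have hcv : Un_cv (fun j => dot (vsub (xs (phi j)) l) (vsub (xs (phi j)) l)) 0.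
  rewrite /dot; apply: (sum_cv0 _ _ _ (fun i j => (xs (phi j) i - l i) * (xs (phi j) i - l i))).
  move=> i.
  have hi : Un_cv (fun j => xs (phi j) i - l i) 0.
    move=> eps he; have [N hN] := h2 i eps he; exists N => j hj.
    have := hN j hj; rewrite /R_dist Rminus_0_r; exact.
  have := CV_mult _ _ _ _ hi hi; rewrite Rmult_0_l; exact.
have hd : forall d, 0 < d -> exists N, forall j, (j >= N)%coq_nat -> Defs.dist (xs (phi j)) l < d.
  move=> d hd; have hdd : d * d > 0 by apply: Rmult_lt_0_compat.
  have [N hN] := hcv _ hdd; exists N => j hj; have := hN j hj.
  rewrite /R_dist Rminus_0_r Rabs_pos_eq; last exact: dot_ge0.
  move=> h; rewrite /Defs.dist /vnorm -(sqrt_square d); last lra.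
  apply: sqrt_lt_1_alt; split => //; exact: dot_ge0.
have hcl : closure_n Omega l.
  move=> eps he; have [N hN] := hd eps he; exists (xs (phi N)); split.
    exact: (proj1 (hxs _)).
  apply: hN; lia.
have [d [hd0 hdc]] := hc l hcl 1 Rlt_0_1.
have [N hN] := hd d hd0.
have [K hK] := INR_unbounded (1 - u l).
pose j := Nat.max N K.
have hj1 := hN j ltac:(rewrite /j; lia).
have hj2 := hdc (xs (phi j)) (in_closure _ _ _ (proj1 (hxs _))) hj1.
have hj3 := proj2 (hxs (phi j)).
have hj4 : INR K <= INR (phi j).
  apply: le_INR; have := incr_ge phi h1 j; rewrite /j; lia.
have := Rle_abs (u (xs (phi j)) - u l); have := Rle_abs (-(u (xs (phi j)) - u l)).
rewrite Rabs_Ropp; lra.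
Qed.

Lemma sum_minus n (F G : 'I_n -> R) :
  \big[Rplus/0]_(i < n) F i - \big[Rplus/0]_(i < n) G i = \big[Rplus/0]_(i < n) (F i - G i).
Proof.
elim: n F G => [|n IH] F G; first by rewrite !big_ord0 /=; lra.
rewrite !big_ord_recr /= -IH; simpl; lra.
Qed.

Lemma cont_phi n (x0 : pt n) m K : 0 <= K ->
  forall x, cont_at (fun y => m - K * dot (vsub y x0) (vsub y x0)) x.
Proof.
move=> hK x eps he.
set C := vnorm (vsub x x0).
have hC : 0 <= C by apply: sqrt_pos.
set A := (K + 1) * (INR n + 1) * (2 * C + 2).
have hn := pos_INR n.
have hA : 0 < A by rewrite /A; apply: Rmult_lt_0_compat; [apply: Rmult_lt_0_compat|]; lra.
exists (Rmin 1 (eps / A)); split.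
  apply: Rmin_glb_lt; [lra | apply: Rdiv_lt_0_compat => //].
move=> y hy.
have hd1 := Rmin_l 1 (eps / A); have hd2 := Rmin_r 1 (eps / A).
set d := Rmin 1 (eps / A) in hy hd1 hd2.
have hd0 : 0 < d by apply: Rmin_glb_lt; [lra | apply: Rdiv_lt_0_compat].
have hterm : forall i, Rabs (vsub y x0 i * vsub y x0 i - vsub x x0 i * vsub x x0 i) <= d * (2 * C + 1).
  move=> i.
  have e1 : Rabs (y i - x i) <= d.
    have := coord_le_norm _ (vsub y x) i; rewrite /Defs.dist in hy; rewrite {1}/vsub; lra.
  have e2 := coord_le_norm _ (vsub x x0) i.
  rewrite /vsub in e2 *.
  have -> : (y i - x0 i) * (y i - x0 i) - (x i - x0 i) * (x i - x0 i)
          = (y i - x i) * ((y i - x i) + 2 * (x i - x0 i)) by ring.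
  rewrite Rabs_mult.
  have e3 : Rabs ((y i - x i) + 2 * (x i - x0 i)) <= 2 * C + 1.
    have := Rabs_triang (y i - x i) (2 * (x i - x0 i)).
    rewrite Rabs_mult (Rabs_pos_eq 2); [rewrite -/C in e2; lra| lra].
  apply: Rmult_le_compat => //; apply: Rabs_pos.
have hs : Rabs (dot (vsub y x0) (vsub y x0) - dot (vsub x x0) (vsub x x0)) <= INR n * (d * (2 * C + 1)).
  rewrite /dot sum_minus -sum_const; exact: sum_abs.
have -> : m - K * dot (vsub y x0) (vsub y x0) - (m - K * dot (vsub x x0) (vsub x x0))
   = - (K * (dot (vsub y x0) (vsub y x0) - dot (vsub x x0) (vsub x x0))) by ring.
rewrite Rabs_Ropp Rabs_mult (Rabs_pos_eq K) //.
have h1 : K * Rabs (dot (vsub y x0) (vsub y x0) - dot (vsub x x0) (vsub x x0)) <= K * (INR n * (d * (2 * C + 1))).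
  exact: Rmult_le_compat_l.
have h2 : K * (INR n * (d * (2 * C + 1))) < A * d.
  have g1 : K * INR n <= (K + 1) * (INR n + 1) by nra.
  have g2 : K * INR n * (2 * C + 1) < (K + 1) * (INR n + 1) * (2 * C + 2).
    have g3 : 0 < (K + 1) * (INR n + 1) by nra.
    have g4 : 0 <= K * INR n by nra.
    nra.
  rewrite /A.
  have -> : K * (INR n * (d * (2 * C + 1))) = (K * INR n * (2 * C + 1)) * d by ring.
  apply: Rmult_lt_compat_r => //.
have h3 : A * d <= eps.
  have : d * A <= eps / A * A by apply: Rmult_le_compat_r; lra.
  rewrite /Rdiv Rmult_assoc Rinv_l; lra.
lra.
Qed.

Lemma C2_phi n (U : pt n -> Prop) (x0 : pt n) m K : 0 <= K ->
  C2_on U (fun y => m - K * dot (vsub y x0) (vsub y x0))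
          (fun y i => -(2*K) * (y i - x0 i))
          (fun y i j => -(2*K) * ebasis j i).
Proof.
move=> hK; split; [|split; [|split; [|split]]].
- move=> x _ i; rewrite /has_partial.
  have -> : (fun t => m - K * dot (vsub (vadd x (vscale t (ebasis i))) x0)
                                   (vsub (vadd x (vscale t (ebasis i))) x0))
          = (fun t => m - K * (dot (vsub x x0) (vsub x x0) + (2 * t * vsub x x0 i + t * t))).
    apply: functional_extensionality => t; rewrite -dot_basis.
    have -> : vsub (vadd x (vscale t (ebasis i))) x0 = vadd (vsub x x0) (vscale t (ebasis i)) by
      apply: functional_extensionality => j; rewrite /vsub /vadd; ring.
    by [].
  exact: Der.d1.
- move=> x _ i j; rewrite /has_partial /=.
  have -> : (fun t => -(2*K) * (vadd x (vscale t (ebasis j)) i - x0 i))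
          = (fun t => -(2*K) * ((x i - x0 i) + t * ebasis j i)).
    apply: functional_extensionality => t; rewrite /vadd /vscale; ring.
  exact: Der.d2.
- move=> x _; exact: cont_phi.
- move=> x _ i eps he; exists (eps / (2 * K + 1)); split.
    apply: Rdiv_lt_0_compat; lra.
  move=> y hy; have := coord_le_norm _ (vsub y x) i; rewrite {1}/vsub => hc.
  have -> : -(2*K) * (y i - x0 i) - -(2*K) * (x i - x0 i) = -(2*K) * (y i - x i) by ring.
  rewrite Rabs_mult Rabs_Ropp (Rabs_pos_eq (2*K)); last lra.
  rewrite /Defs.dist in hy.
  have h1 : Rabs (y i - x i) < eps / (2 * K + 1) by lra.
  have h2 : (2 * K + 1) * (eps / (2 * K + 1)) = eps by field; lra.
  have h3 : 0 <= Rabs (y i - x i) := Rabs_pos _.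
  nra.
- move=> x _ i j eps he; exists 1; split; first lra.
  move=> y _; rewrite Rminus_diag Rabs_R0; lra.
Qed.

Theorem lemma3 (n : nat) (Omega : pt n -> Prop) (rho : pt n -> R)
  (Drho : pt n -> pt n) (Lam : R) (u : pt n -> R)
  (Omega1 : pt n -> Prop) (m : R) :
  is_open_n Omega -> bounded_n Omega -> convex_n Omega ->
  defining_function Omega rho Drho ->
  0 < Lam ->
  viscosity_solution Omega (outer_normal Drho) Lam u ->
  (exists x y, closure_n Omega x /\ closure_n Omega y /\ u x <> u y) ->
  is_open_n Omega1 -> connected_n Omega1 -> (forall x, Omega1 x -> Omega x) ->
  0 < m ->
  (forall x, closure_n Omega1 x -> m <= u x) ->
  forall x, Omega1 x -> m < u x.
Proof.
move=> _ hbd _ _ hLam [hcont [_ [_ [hsup _]]]] _ hO1 _ hsub hm hge x0 hx0.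
apply: Rnot_le_lt => hle.
have hu0 : u x0 = m by have := hge x0 (in_closure _ _ _ hx0); lra.
have [L hL] := lower_bound n Omega u hbd hcont.
have hLm : L <= m by rewrite -hu0; apply: hL; exact: hsub.
have [r [hr hball]] := hO1 x0 hx0.
set K := (m - L + 1) / (r * r).
have hr2 : 0 < r * r by nra.
have hK : 0 < K by apply: Rdiv_lt_0_compat; lra.
have hKr : K * (r * r) = m - L + 1 by rewrite /K; field; lra.
have hdot0 : dot (vsub x0 x0) (vsub x0 x0) = 0.
  rewrite /dot big1 // => i _; rewrite /vsub; ring.
have := hsup x0 (fun y => m - K * dot (vsub y x0) (vsub y x0))
          (fun y i => -(2*K) * (y i - x0 i)) (fun y i j => -(2*K) * ebasis j i)
          (hsub _ hx0) (C2_phi n Omega x0 m K (Rlt_le _ _ hK)).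
have hphi0 : m - K * dot (vsub x0 x0) (vsub x0 x0) = u x0 by rewrite hdot0 hu0; ring.
move=> /(_ hphi0).
have htouch : forall y, Omega y -> y <> x0 -> u y > m - K * dot (vsub y x0) (vsub y x0).
  move=> y hy hne.
  case: (Rlt_or_le (Defs.dist y x0) r) => hdy.
    have hy1 := hball y hdy.
    have := hge y (in_closure _ _ _ hy1).
    have [i hi] : exists i, y i <> x0 i.
      apply: NNPP => hn; apply: hne; apply: functional_extensionality => i.
      by apply: NNPP => h; apply: hn; exists i.
    have hpos : 0 < dot (vsub y x0) (vsub y x0).
      have := coord_le_dot _ (vsub y x0) i; rewrite {1 2}/vsub.
      have : y i - x0 i <> 0 by lra.
      move=> h0 h1; have := Rsqr_pos_lt _ h0; rewrite /Rsqr; lra.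
    have : 0 < K * dot (vsub y x0) (vsub y x0) by apply: Rmult_lt_0_compat.
    lra.
  have hv := vnorm_sq _ (vsub y x0).
  have hvn : 0 <= r <= vnorm (vsub y x0) by rewrite /Defs.dist in hdy; lra.
  have hrd : r * r <= dot (vsub y x0) (vsub y x0) by rewrite -hv; nra.
  have := hL y hy.
  have : K * (r * r) <= K * dot (vsub y x0) (vsub y x0) by apply: Rmult_le_compat_l; lra.
  lra.
move=> /(_ htouch).
rewrite /Eop; case: (Rlt_dec 0 (u x0)) => [_|]; last lra.
rewrite /Fop /=.
have -> : vnorm (fun i => -(2*K) * (x0 i - x0 i)) = 0 by apply: vnorm0 => i; ring.
rewrite hphi0 hu0 Rabs_pos_eq; last lra.
set q := (- quad _ _).
have := Rmin_l (0 - Lam * m) q.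
have : 0 < Lam * m by apply: Rmult_lt_0_compat.
lra.
Qed.
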